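(* Let $c\ge 2$ be an integer with $\omega\ge 1$ distinct prime factors. Then for every real $x>0$, $$\frac{\varphi(c)}{x}-2^{\omega-1}<E_c(x)<\frac{\varphi(c)}{x}+2^{\omega-1}.$$
   Context: $\varphi$ is Euler's totient function. For a positive integer $c$ with distinct prime factors $q_1,\dots,q_\omega$ and real $x\ne 0$, $$E_c(x)=\sum_{S\subseteq\{1,\dots,\omega\}}(-1)^{|S|}\left\lfloor \frac{c}{x\prod_{i\in S}q_i}\right\rfloor.$$ *)

(* Defs.v *)
From mathcomp Require Import all_boot all_order all_algebra.
From mathcomp Require Import reals.
Set Implicit Arguments. Unset Strict Implicit. Unset Printing Implicit Defensive.
Import Order.TTheory GRing.Theory Num.Theory.
Local Open Scope ring_scope.

Definition omega (c : nat) : nat := size (primes c).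

Definition qprime (c : nat) (i : 'I_(omega c)) : nat := nth 0%N (primes c) i.

Definition Ec (R : realType) (c : nat) (x : R) : R :=
  \sum_(S : {set 'I_(omega c)})
     (-1) ^+ #|S| * (Num.floor (c%:R / (x * \prod_(i in S) (qprime i)%:R)))%:~R.

(* Main.v *)
Require Import Defs.
From mathcomp Require Import all_boot all_order all_algebra.
From mathcomp Require Import reals.
From mathcomp Require Import lra ring.
Import Order.TTheory GRing.Theory Num.Theory.
Local Open Scope ring_scope.

Lemma alt_bound {R : realType} n (i0 : 'I_n) (g : {set 'I_n} -> R) :
  (forall S, 0 <= g S < 1) ->
  `|\sum_(S : {set 'I_n}) (-1) ^+ #|S| * g S| < (2 ^ n.-1)%:R.
Proof.
move=> hg.
pose t (S : {set 'I_n}) := if i0 \in S then S :\ i0 else i0 |: S.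
have tK : involutive t.
  move=> S; rewrite /t; case h: (i0 \in S).
    by rewrite setD11 setD1K.
  by rewrite setU11 setU1K // h.
rewrite (bigID (fun S : {set 'I_n} => i0 \in S)) /=.
have -> : \sum_(S : {set 'I_n} | i0 \in S) (-1) ^+ #|S| * g S =
          \sum_(S : {set 'I_n} | i0 \notin S) (-1) ^+ #|i0 |: S| * g (i0 |: S).
  rewrite (reindex_inj (inv_inj tK)); apply: eq_big => S.
    by rewrite /t; case: ifP => h; rewrite ?inE ?eqxx ?h.
  rewrite /t; case h: (i0 \in S) => //.
  by rewrite setD11.
rewrite -big_split /=.
apply: (le_lt_trans (ler_norm_sum _ _ _)).
have -> : (2 ^ n.-1)%:R = \sum_(S : {set 'I_n} | i0 \notin S) (1 : R).
  have -> : (2 ^ n.-1)%N = #|powerset [set~ i0]| by rewrite card_powerset cardsC1 card_ord.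
  rewrite -sum1_card natr_sum.
  apply: eq_bigl => S; rewrite powersetE subsetC sub1set !inE.
  by [].
apply: ltr_sum.
  by apply/hasP; exists set0; rewrite ?mem_index_enum ?inE.
move=> S nS; rewrite cardsU1 nS exprD expr1 mulN1r mulNr addrC -mulrBr normrM normrX normrN1 expr1n mul1r.
have := hg S; have := hg (i0 |: S); rewrite ltr_norml => /andP[? ?] /andP[? ?].
apply/andP; split; lra.
Qed.
Lemma prod_expand (R : comNzRingType) n (a : 'I_n -> R) :
  \prod_(i < n) (1 + a i) = \sum_(S : {set 'I_n}) \prod_(i in S) a i.
Proof.
transitivity (\prod_(i < n) \sum_(b : bool) (if b then a i else 1)).
  by apply: eq_bigr => i _; rewrite big_bool /= addrC.
rewrite bigA_distr_bigA /=.
rewrite [RHS](reindex (fun f : {ffun 'I_n -> bool} => [set i | f i])) /=.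
  apply: eq_bigr => f _; rewrite [RHS]big_mkcond /=.
  by apply: eq_bigr => i _; rewrite inE; case: (f i).
exists (fun S : {set 'I_n} => [ffun i => i \in S]) => [f _ | S _].
  by apply/ffunP => i; rewrite ffunE inE.
by apply/setP => i; rewrite !inE ffunE.
Qed.

Lemma totient_real (R : realType) c : (0 < c)%N ->
  (totient c)%:R = c%:R * \prod_(p <- primes c) (1 - (p%:R : R)^-1).
Proof.
move=> c0.
rewrite {2}(prod_prime_decomp c0) prime_decompE big_map /= totientE //.
rewrite !natr_prod -big_split /= big_seq [RHS]big_seq.
apply: eq_bigr => p hp.
have pp : prime p by move: hp; rewrite mem_primes => /andP[].
have p0 : (p%:R : R) != 0 by rewrite pnatr_eq0 -lt0n prime_gt0.
have e0 : (0 < logn p c)%N by rewrite logn_gt0.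
rewrite -(prednK e0) expnS natrM natrX /= -(prednK (prime_gt0 pp)) /=.
rewrite natrM !natrX mulrS.
field.
by rewrite -mulrS prednK ?prime_gt0.
Qed.

Theorem lemma1 (R : realType) (c : nat) (x : R) :
  (2 <= c)%N -> (1 <= omega c)%N -> 0 < x ->
  (totient c)%:R / x - (2 ^ (omega c).-1)%:R < Ec c x /\
  Ec c x < (totient c)%:R / x + (2 ^ (omega c).-1)%:R.
Proof.
move=> c2 n1 x0.
pose i0 : 'I_(omega c) := Ordinal n1.
pose y (S : {set 'I_(omega c)}) : R := c%:R / (x * \prod_(i in S) (qprime i)%:R).
pose g S := y S - (Num.floor (y S))%:~R.
have hg : forall S, 0 <= g S < 1.
  move=> S; rewrite /g; have h1 := floor_le (y S); have h2 := floorD1_gt (y S).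
  rewrite intrD in h2; apply/andP; split; lra.
have hp : \prod_(p <- primes c) (1 - (p%:R : R)^-1) =
          \prod_(i < omega c) (1 + (- ((qprime i)%:R)^-1)).
  by rewrite (big_nth 0%N) big_mkord.
have hsum : \sum_(S : {set 'I_(omega c)}) (-1) ^+ #|S| * y S = (totient c)%:R / x.
  rewrite totient_real; last by apply: leq_trans c2.
  rewrite hp prod_expand big_distrr /= big_distrl /=.
  apply: eq_bigr => S _; rewrite /y prodrN prodfV invfM; ring.
have hE : Ec c x = (totient c)%:R / x - \sum_(S : {set 'I_(omega c)}) (-1) ^+ #|S| * g S.
  rewrite /Ec -hsum -sumrB; apply: eq_bigr => S _; rewrite /g /y; ring.
have := (@alt_bound R (omega c) i0 g hg); rewrite ltr_norml => /andP[h1 h2].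
rewrite hE; split; lra.
Qed.
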